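(* Let $T$ be a non-star tree and $x$ a vertex of $T$ with neighbors $x_1,\dots,x_n$, $n\ge 2$. Suppose that for $i=1,\dots,p$, where $1\le p<n$, there exists a $(T_{(x_i,x)},x_i)$-well 2-placement. Let $T'$ be the connected component containing $x$ in $T-\{xx_i: i=1,\dots,p\}$. If there exists a $(T',z)$-well 2-placement $\sigma$ with $dist(x,\sigma(x))\le 3$, where $z$ is a vertex of $T'$, then there exists a $(T,z)$-well 2-placement $\sigma_z$ with $\sigma_z(v)=\sigma(v)$ for every $v\in V(T')$.
   Context: All graphs are finite, simple and undirected. A non-star tree is a tree not isomorphic to a star $K_{1,m}$ for any $m\ge0$. For an edge $ab$ of a tree $T$, $T_{(a,b)}$ denotes the connected component containing $a$ in $T-\{ab\}$. For a tree $S$, a permutation $\sigma$ of $V(S)$ is a 2-placement of $S$ if $\sigma(a)\sigma(b)\notin E(S)$ for every edge $ab\in E(S)$; $\sigma(S)\subseteq S^k$ means $dist_S(\sigma(a),\sigma(b))\le k$ for every edge $ab$ of $S$. For a non-star tree $S$ and vertex $w$, a fixed-point-free permutation $\sigma$ of $V(S)$ is an $(S,w)$-well 2-placement if (distances and degrees taken in $S$): (1) $\sigma$ is a 2-placement of $S$; (2) $\sigma(S)\subseteq S^6$; (3) $dist(w,\sigma(w))\le 2$; (4) $dist(y,\sigma(y))\le 3$ for every neighbor $y$ of $w$; (5) $dist(y,\sigma(y))\le 4$ for every $y$ of degree $1$; (6) every cycle of $\sigma$ (in its disjoint cycle decomposition) has length at most $5$. *)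

(* Defs.v *)
From HB Require Import structures.
From mathcomp Require Import all_boot all_fingroup.
Set Implicit Arguments. Unset Strict Implicit. Unset Printing Implicit Defensive.

Section Defs.
Variable V : finType.

Definition ind (e : rel V) (A : {set V}) : rel V :=
  fun u v => [&& u \in A, v \in A & e u v].

Definition dist_le (e : rel V) (A : {set V}) (k : nat) (u v : V) : Prop :=
  u \in A /\ exists p : seq V, [/\ path (ind e A) u p, last u p = v & size p <= k].

Definition deg (e : rel V) (A : {set V}) (u : V) : nat := #|[set y | ind e A u y]|.

Definition is_tree (e : rel V) (A : {set V}) : Prop :=
  [/\ A != set0,
      {in A &, forall u v, connect (ind e A) u v} &
      forall c : seq V, uniq c -> 2 < size c -> ~~ path.cycle (ind e A) c].

(* The tree on A is a star K_{1,m} (m >= 0): some center c in A is an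
   endpoint of every edge. *)
Definition is_star (e : rel V) (A : {set V}) : Prop :=
  exists2 c, c \in A & forall u v, ind e A u v -> u = c \/ v = c.

Definition nonstar_tree (e : rel V) (A : {set V}) : Prop :=
  is_tree e A /\ ~ is_star e A.

(* (S,w)-well 2-placement, S the induced subgraph on A; a permutation of V(S)
   is represented by a permutation of V supported on A. *)
Definition well2 (e : rel V) (A : {set V}) (w : V) (s : {perm V}) : Prop :=
  nonstar_tree e A /\ w \in A /\ perm_on A s /\
  {in A, forall y, s y != y} /\
  (forall a b, ind e A a b -> ~~ ind e A (s a) (s b)) /\
  (forall a b, ind e A a b -> dist_le e A 6 (s a) (s b)) /\
  dist_le e A 2 w (s w) /\
  (forall y, ind e A w y -> dist_le e A 3 y (s y)) /\
  (forall y, y \in A -> deg e A y = 1 -> dist_le e A 4 y (s y)) /\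
  {in A, forall y, #|porbit s y| <= 5}.

Definition rem_edge (e : rel V) (a b : V) : rel V :=
  fun u v => e u v && ~~ (((u == a) && (v == b)) || ((u == b) && (v == a))).

Definition rem_edges (e : rel V) (x : V) (X : {set V}) : rel V :=
  fun u v => e u v && ~~ (((u == x) && (v \in X)) || ((v == x) && (u \in X))).

Definition component (f : rel V) (v : V) : {set V} := [set y | connect f v y].

End Defs.

(* Main.v *)
Require Import Defs.
From mathcomp Require Import all_boot all_fingroup.
From Stdlib Require Import ClassicalEpsilon.
Set Implicit Arguments. Unset Strict Implicit. Unset Printing Implicit Defensive.

Lemma ind_setT (V : finType) (e : rel V) : ind e [set: V] =2 e.
Proof. by move=> u w; rewrite /ind !in_setT. Qed.

Lemma dist_mono (V : finType) (e : rel V) (A : {set V}) k k' u v :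
  k <= k' -> dist_le e A k u v -> dist_le e [set: V] k' u v.
Proof.
move=> kk [_ [p [Hp Hl Hs]]]; split; first by rewrite in_setT.
exists p; split=> //; last exact: leq_trans kk.
by apply: sub_path Hp => a b /and3P[_ _ h]; rewrite ind_setT.
Qed.

Lemma dist_sym (V : finType) (e : rel V) k u v : symmetric e ->
  dist_le e [set: V] k u v -> dist_le e [set: V] k v u.
Proof.
move=> es [_ [p [Hp Hl Hs]]]; split; first by rewrite in_setT.
exists (rev (belast u p)); split.
- rewrite -Hl rev_path; apply: sub_path Hp => a b; by rewrite !ind_setT es.
- rewrite -Hl; case/lastP: p {Hp Hl Hs} => //= q y.
  by rewrite belast_rcons last_rcons rev_cons last_rcons.
- by rewrite size_rev size_belast.
Qed.

Lemma dist_cat (V : finType) (e : rel V) k1 k2 u v w :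
  dist_le e [set: V] k1 u v -> dist_le e [set: V] k2 v w ->
  dist_le e [set: V] (k1 + k2) u w.
Proof.
move=> [_ [p [Hp Hl Hs]]] [_ [q [Hq Hm Ht]]]; split; first by rewrite in_setT.
exists (p ++ q); split.
- by rewrite cat_path Hp Hl.
- by rewrite last_cat Hl.
- by rewrite size_cat leq_add.
Qed.

Lemma dist_edge (V : finType) (e : rel V) u v : e u v -> dist_le e [set: V] 1 u v.
Proof. move=> h; split; first by rewrite in_setT. by exists [:: v]; rewrite /= ind_setT h. Qed.

Lemma rem_edge_sym (V : finType) (e : rel V) a b : symmetric e -> symmetric (rem_edge e a b).
Proof.
move=> es u w; rewrite /rem_edge es; congr (_ && ~~ _).
by rewrite [(w == a) && _]andbC [(w == b) && _]andbC orbC.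
Qed.

Lemma acyc (V : finType) (e : rel V) (e_sym : symmetric e) (e_irr : irreflexive e) (HT : nonstar_tree e [set: V]) a b :
  e a b -> ~ connect (rem_edge e a b) a b.
Proof.
case: HT => [[_ _ Hc] _] eab /connectP [p Hp Hl].
move: Hl; case: (shortenP Hp) => p' Hp' Hu _ Hl.
apply: (negP (Hc (a :: p') Hu _)).
  case: p' Hp' Hu Hl => [|y [|y' q]] //=.
  - by move=> _ _ Hl; move: eab; rewrite Hl e_irr.
  - by move=> /andP[h _] _ Hl; move: h; rewrite Hl /rem_edge !eqxx /= andbF.
rewrite /= rcons_path -Hl ind_setT e_sym eab andbT.
by apply: sub_path Hp' => u w /andP[h _]; rewrite ind_setT.
Qed.

Lemma avoidP (V : finType) (e : rel V) x a p : path e a p -> x \notin a :: p ->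
  path [rel u w | [&& e u w, u != x & w != x]] a p.
Proof.
elim: p a => //= y q IH a /andP[eay Hq].
rewrite in_cons negb_or => /andP[xa Hx].
move: (IH y Hq Hx); move: Hx; rewrite in_cons negb_or => /andP[xy _] ->.
by rewrite eay eq_sym xa eq_sym xy.
Qed.

Lemma porbit_agree (V : finType) (B : {set V}) (s t : {perm V}) y :
  perm_on B s -> {in B, forall v, t v = s v} -> y \in B -> porbit t y = porbit s y.
Proof.
move=> son agr yB.
have H : forall n, iter n t y = iter n s y /\ iter n s y \in B.
  elim=> [|n [IH1 IH2]] //=; rewrite IH1 agr // perm_closed //.
apply/setP => w; apply/porbitP/porbitP => [[i ->]|[i ->]]; exists i;
  by rewrite !permX (proj1 (H i)).
Qed.

Theorem lemma3p4 (V : finType) (e : rel V)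
  (e_sym : symmetric e) (e_irr : irreflexive e)
  (HT : nonstar_tree e [set: V])
  (x : V) (X : {set V})
  (Hn : 2 <= #|[set y | e x y]|)
  (HX : X \subset [set y | e x y])
  (Hp1 : 0 < #|X|) (Hpn : #|X| < #|[set y | e x y]|)
  (Hsub : forall xi, xi \in X ->
     exists s : {perm V}, well2 e (component (rem_edge e xi x) xi) xi s)
  (z : V) (s : {perm V})
  (Hz : z \in component (rem_edges e x X) x)
  (Hs : well2 e (component (rem_edges e x X) x) z s)
  (Hx : dist_le e (component (rem_edges e x X) x) 3 x (s x)) :
  exists sz : {perm V},
    well2 e [set: V] z sz /\
    {in component (rem_edges e x X) x, forall v, sz v = s v}.
Proof.
set C0 := component (rem_edges e x X) x in Hz Hs Hx *.
pose C a := component (rem_edge e a x) a.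
have inC0 : forall v, (v \in C0) = connect (rem_edges e x X) x v.
  by move=> v; rewrite /C0 inE.
have inC : forall a v, (v \in C a) = connect (rem_edge e a x) a v.
  by move=> a v; rewrite /C inE.
have exX : forall a, a \in X -> e x a.
  by move=> a aX; move/subsetP: HX => /(_ a aX); rewrite inE.
have eaX : forall a, a \in X -> e a x by move=> a aX; rewrite e_sym exX.
have xC0 : x \in C0 by rewrite inC0 connect0.
have aC : forall a, a \in C a by move=> a; rewrite inC connect0.
have xnC : forall a, a \in X -> x \notin C a.
  by move=> a aX; rewrite inC; apply/negP; apply: (acyc e_sym e_irr HT (eaX a aX)).
have xneq : forall a, a \in X -> (x == a) = false.
  by move=> a aX; apply/negbTE/eqP => h; move: (exX a aX); rewrite h e_irr.
pose g := [rel u w | [&& e u w, u != x & w != x]].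
have gsym : symmetric g.
  by move=> u w; rewrite /= e_sym [(u != x) && _]andbC.
have CB : forall a v, a \in X -> v \in C a -> connect g a v.
  move=> a v aX; rewrite inC => /connectP [p Hp ->].
  have xn : x \notin a :: p.
    apply/negP => /(path_connect Hp) => H; by move: (xnC a aX); rewrite inC H.
  apply/connectP; exists p => //; apply: avoidP xn.
  by apply: sub_path Hp => u w /andP[].
have F1 : forall a v, a \in X -> v \in C a -> v \in C0 -> False.
  move=> a v aX; rewrite inC inC0 => Hav Hxv.
  have H : connect (rem_edge e a x) x v.
    apply: connect_sub Hxv => u w /andP[euw Hn']; apply: connect1.
    rewrite /rem_edge euw /=; apply: contra Hn' => /orP[/andP[/eqP-> /eqP->]|/andP[/eqP-> /eqP->]];
      by rewrite eqxx aX ?andbT ?orbT.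
  apply: (acyc e_sym e_irr HT (eaX a aX)).
  apply: connect_trans Hav _; by rewrite (sym_connect_sym (@rem_edge_sym _ e a x e_sym)).
have F2 : forall a b v, a \in X -> b \in X -> v \in C a -> v \in C b -> a = b.
  move=> a b v aX bX va vb; case: (eqVneq a b) => [//|nab]; exfalso.
  apply: (acyc e_sym e_irr HT (eaX a aX)).
  have gsub : subrel g (rem_edge e a x).
    move=> u w /and3P[h ux wx].
    by rewrite /rem_edge h /= (negbTE ux) (negbTE wx) !andbF.
  have Hab : connect g a b.
    apply: connect_trans (CB a v aX va) _; rewrite (sym_connect_sym gsym); exact: CB.
  apply: connect_trans (connect_sub (fun u w h => connect1 (gsub u w h)) Hab) _.
  apply: connect1; rewrite /rem_edge eaX //= eq_sym (negbTE nab) /= xneq //.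
  by rewrite andbF.
have F3 : forall v, v \in C0 \/ exists2 a, a \in X & v \in C a.
  move=> v; case: (HT) => [[_ Hc _] _].
  have: connect e x v.
    apply: connect_sub (Hc x v (in_setT x) (in_setT v)) => u w h.
    by apply: connect1; rewrite -ind_setT.
  case/connectP => p Hp Hl; move: Hl; case: (shortenP Hp) => {Hp} p Hp Hu _ ->.
  case: p Hp Hu => [|y q] /=; first by left.
  case/andP => exy Hq /andP[]; rewrite in_cons negb_or => /andP[xy xq] _.
  have Hg : path g y q by apply: avoidP Hq _; rewrite in_cons negb_or xy xq.
  case: (boolP (y \in X)) => yX.
  - right; exists y => //; rewrite inC; apply/connectP; exists q => //.
    apply: sub_path Hg => u w /and3P[h ux wx].
    by rewrite /rem_edge h /= (negbTE ux) (negbTE wx) !andbF.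
  - left; rewrite inC0; apply/connectP; exists (y :: q) => //=.
    apply/andP; split.
      by rewrite /rem_edges exy eqxx (negbTE yX) /= eq_sym (negbTE xy).
    apply: sub_path Hg => u w /and3P[h ux wx].
    by rewrite /rem_edges h /= (negbTE ux) (negbTE wx).
have Cl0 : forall y w, y \in C0 -> e y w -> ~~ ((y == x) && (w \in X)) -> w \in C0.
  move=> y w yC eyw H; move: (yC); rewrite !inC0 => Hy; apply: connect_trans Hy (connect1 _).
  rewrite /rem_edges eyw /= negb_or H /=; apply/negP => /andP[_ yX].
  by apply: (F1 y y yX (aC y) yC).
have Cla : forall a y w, a \in X -> y \in C a -> e y w -> ~~ ((y == a) && (w == x)) -> w \in C a.
  move=> a y w aX yC eyw H; move: (yC); rewrite !inC => Hy; apply: connect_trans Hy (connect1 _).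
  rewrite /rem_edge eyw /= negb_or H /=; apply/negP => /andP[/eqP yx _].
  by move: (xnC a aX); rewrite -yx yC.
have [F HF] : exists F : V -> {perm V}, forall a, a \in X -> well2 e (C a) a (F a).
  have H : forall a, exists t : {perm V}, a \in X -> well2 e (C a) a t.
    move=> a; case: (boolP (a \in X)) => aX; last by exists 1%g.
    by case: (Hsub a aX) => t ht; exists t.
  exists (fun a => proj1_sig (constructive_indefinite_description _ (H a))) => a aX.
  by case: constructive_indefinite_description => t /= /(_ aX).
case: Hs => _ [_ [son [sfp [s2p [s6 [s3 [s4 [s5 sorb]]]]]]]].
have sC : forall v, (s v \in C0) = (v \in C0) by move=> v; rewrite perm_closed.
have Fon : forall a, a \in X -> perm_on (C a) (F a) by move=> a /HF [_ [_ [h _]]].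
have FC : forall a v, a \in X -> (F a v \in C a) = (v \in C a).
  by move=> a v aX; rewrite perm_closed // Fon.
pose f v := if v \in C0 then s v
            else if [pick a in X | v \in C a] is Some a then F a v else v.
have fC0 : forall v, v \in C0 -> f v = s v by move=> v h; rewrite /f h.
have fCa : forall a v, a \in X -> v \in C a -> f v = F a v.
  move=> a v aX va; rewrite /f ifF; last by apply/negP => h; apply: (F1 a v aX va h).
  case: pickP => [b /andP[bX vb]|/(_ a)]; last by rewrite aX va.
  by rewrite (F2 _ _ _ bX aX vb va).
have finj : injective f.
  move=> u w; case: (F3 u) => [uC|[a aX uC]]; case: (F3 w) => [wC|[b bX wC]].
  - by rewrite !fC0 //; apply: perm_inj.
  - rewrite fC0 // (fCa b w bX wC) => H; exfalso.
    apply: (F1 b (s u) bX); first by rewrite H FC. by rewrite sC.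
  - rewrite (fC0 w wC) (fCa a u aX uC) => H; exfalso.
    apply: (F1 a (s w) aX); first by rewrite -H FC. by rewrite sC.
  - rewrite (fCa a u aX uC) (fCa b w bX wC) => H.
    have ab : a = b by apply: (F2 a b (F a u)); rewrite // ?FC // H FC.
    by subst b; move: H; apply: perm_inj.
pose sz := perm finj.
have szE : forall v, sz v = f v by move=> v; rewrite /sz permE.
have Edge : forall u w, e u w ->
   [\/ u \in C0 /\ w \in C0,
       exists2 a, a \in X & (u \in C a /\ w \in C a),
       exists2 a, a \in X & (u = x /\ w = a) |
       exists2 a, a \in X & (u = a /\ w = x)].
  move=> u w euw; case: (F3 u) => [uC|[a aX uC]].
  - case: (boolP ((u == x) && (w \in X))) => [/andP[/eqP-> wX]|H].
    + by constructor 3; exists w.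
    + by constructor 1; split => //; apply: Cl0 uC euw H.
  - case: (boolP ((u == a) && (w == x))) => [/andP[/eqP-> /eqP->]|H].
    + by constructor 4; exists a.
    + by constructor 2; exists a => //; split => //; apply: Cla aX uC euw H.
have cross : forall a, a \in X -> ~~ e (s x) (F a a).
  move=> a aX; apply/negP => h.
  case: (Edge _ _ h) => [[_ H]|[b bX [H _]]|[b bX [H _]]|[b bX [H _]]].
  - by apply: (F1 a (F a a) aX); rewrite ?FC ?aC.
  - by apply: (F1 b (s x) bX); rewrite ?sC.
  - by move: (sfp x xC0); rewrite H eqxx.
  - by apply: (F1 b (s x) bX); rewrite ?sC ?H ?aC.
have cross6 : forall a, a \in X -> dist_le e [set: V] 6 (s x) (F a a).
  move=> a aX; have [_ [_ [_ [_ [_ [_ [Fa3 _]]]]]]] := HF a aX.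
  have h1 := dist_sym e_sym (dist_mono (leqnn 3) Hx).
  exact: dist_cat (dist_cat h1 (dist_edge (exX a aX))) (dist_mono (leqnn 2) Fa3).
exists sz; split; last by move=> v vC; rewrite szE fC0.
split; first exact: HT.
split; first by rewrite in_setT.
split; first by apply/subsetP => v _; rewrite in_setT.
split.
  move=> v _; case: (F3 v) => [vC|[a aX vC]].
  - by rewrite szE fC0 //; apply: sfp.
  - by rewrite szE (fCa a v aX vC); have [_ [_ [_ [h _]]]] := HF a aX; apply: h.
split.
  move=> u w; rewrite !ind_setT => euw; case: (Edge u w euw).
  - case=> uC wC; rewrite !szE !fC0 //.
    have := s2p u w; rewrite /ind uC wC euw !sC uC wC /=; by apply.
  - case=> a aX [uC wC]; rewrite !szE (fCa a u aX uC) (fCa a w aX wC).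
    have [_ [_ [_ [_ [h _]]]]] := HF a aX.
    have := h u w; rewrite /ind uC wC euw !FC // uC wC /=; by apply.
  - case=> a aX [-> ->]; rewrite !szE (fC0 x xC0) (fCa a a aX (aC a)); exact: cross.
  - case=> a aX [-> ->]; rewrite !szE (fC0 x xC0) (fCa a a aX (aC a)) e_sym; exact: cross.
split.
  move=> u w; rewrite ind_setT => euw; case: (Edge u w euw).
  - case=> uC wC; rewrite !szE !fC0 //; apply: dist_mono (leqnn 6) (s6 u w _).
    by rewrite /ind uC wC euw.
  - case=> a aX [uC wC]; rewrite !szE (fCa a u aX uC) (fCa a w aX wC).
    have [_ [_ [_ [_ [_ [h _]]]]]] := HF a aX.
    by apply: dist_mono (leqnn 6) (h u w _); rewrite /ind uC wC euw.
  - case=> a aX [-> ->]; rewrite !szE (fC0 x xC0) (fCa a a aX (aC a)); exact: cross6.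
  - case=> a aX [-> ->]; rewrite !szE (fC0 x xC0) (fCa a a aX (aC a)).
    exact: dist_sym e_sym (cross6 a aX).
split; first by rewrite szE fC0 //; apply: dist_mono (leqnn 2) s3.
split.
  move=> y; rewrite ind_setT => ezy; case: (Edge z y ezy).
  - case=> _ yC; rewrite szE fC0 //; apply: dist_mono (leqnn 3) (s4 y _).
    by rewrite /ind Hz yC ezy.
  - by case=> a aX [zC _]; exfalso; apply: (F1 a z aX zC Hz).
  - case=> a aX [_ ->]; rewrite szE (fCa a a aX (aC a)).
    have [_ [_ [_ [_ [_ [_ [h _]]]]]]] := HF a aX.
    exact: dist_mono _ h.
  - by case=> a aX [zE _]; exfalso; apply: (F1 a z aX _ Hz); rewrite zE aC.
split.
  move=> y _ dy; case: (F3 y) => [yC|[a aX yC]].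
  - case: (eqVneq y x) => [->|yx]; first by rewrite szE fC0 //; apply: dist_mono _ Hx.
    rewrite szE fC0 //; apply: dist_mono (leqnn 4) (s5 y yC _).
    rewrite -dy /deg; apply: eq_card => w; rewrite !inE ind_setT /ind yC /=.
    case ey: (e y w); rewrite ?andbF ?andbT //.
    by apply: Cl0 yC ey _; rewrite (negbTE yx).
  - have [_ [_ [_ [_ [_ [_ [h3 [_ [h5 _]]]]]]]]] := HF a aX.
    case: (eqVneq y a) => [->|ya].
      by rewrite szE (fCa a a aX (aC a)); apply: dist_mono _ h3.
    rewrite szE (fCa a y aX yC); apply: dist_mono (leqnn 4) (h5 y yC _).
    rewrite -dy /deg; apply: eq_card => w; rewrite !inE ind_setT /ind yC /=.
    case ey: (e y w); rewrite ?andbF ?andbT //.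
    by apply: Cla aX yC ey _; rewrite (negbTE ya).
move=> y _; case: (F3 y) => [yC|[a aX yC]].
- rewrite (porbit_agree son _ yC); first exact: sorb.
  by move=> v vC; rewrite szE fC0.
- have [_ [_ [_ [_ [_ [_ [_ [_ [_ h]]]]]]]]] := HF a aX.
  rewrite (porbit_agree (Fon a aX) _ yC); first exact: h.
  by move=> v vC; rewrite szE (fCa a v aX vC).
Qed.
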